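(* Let $n$ be a security parameter and $F\colon\{0,1\}^n\to\{0,1\}^m$ a function. If $F^{-1}$ has accessible Shannon entropy at most $k$, then for any $p=p(n)\in(0,1)$, $F^{-1}$ has $p$-accessible max-entropy at most $k/p+O(2^{-k/p})$.
   Context: An $F$-collision-finder is a randomized algorithm $A$ with $A(x;r)\in F^{-1}(F(x))$ for all $x$ and coins $r$. Let $X$ be uniform on $\{0,1\}^n$ and $R$ uniform coins of $A$. $F^{-1}$ has accessible Shannon entropy at most $k$ if for every probabilistic polynomial-time (PPT) $F$-collision-finder $A$, $H(A(X;R)\mid X)\le k$ for all sufficiently large $n$. $F^{-1}$ has $p$-accessible max-entropy at most $k'$ if for every PPT $F$-collision-finder $A$ there is a family of sets $\{\mathcal{L}(x)\}_x$, each of size at most $2^{k'}$, with $x\in\mathcal{L}(x)$, such that $\Pr[A(X;R)\in\mathcal{L}(X)]\ge1-p$ for all sufficiently large $n$. *)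

(* Defs.v *)
From HB Require Import structures.
From mathcomp Require Import all_boot all_order all_algebra.
From mathcomp Require Import reals exp.
Unset Printing Implicit Defensive.
Import Order.TTheory GRing.Theory Num.Theory.
Local Open Scope ring_scope.

Notation bits n := (n.-tuple bool).

(* A randomized algorithm (uniform over the security parameter n):
   on security parameter n it takes an input x in {0,1}^n and
   coins r in {0,1}^(coins n), and outputs an element of {0,1}^n. *)
Record alg := Alg {
  coins : nat -> nat ;
  run : forall n, bits n -> bits (coins n) -> bits n }.
Arguments run : clear implicits.

Definition collision_finder (m : nat -> nat) (F : forall n, bits n -> bits (m n))
  (A : alg) : Prop :=
  forall n (x : bits n) (r : bits (coins A n)), F n (run A n x r) = F n x.

Section Defs.
Variable R : realType.

Definition log2 (x : R) : R := ln x / ln 2.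

Definition out_prob (A : alg) (n : nat) (x y : bits n) : R :=
  #|[set r : bits (coins A n) | run A n x r == y]|%:R / (2 ^ coins A n)%:R.

(* H(A(X;R) | X) with X uniform on {0,1}^n (convention 0 log 0 = 0) *)
Definition cond_entropy (A : alg) (n : nat) : R :=
  ((2 ^ n)%:R)^-1 *
  \sum_(x : bits n) \sum_(y : bits n | 0 < out_prob A n x y)
     out_prob A n x y * log2 (out_prob A n x y)^-1.

Definition succ_prob (A : alg) (n : nat) (L : bits n -> {set bits n}) : R :=
  #|[set xr : bits n * bits (coins A n) | run A n xr.1 xr.2 \in L xr.1]|%:R
    / (2 ^ (n + coins A n))%:R.

(* F^{-1} has accessible Shannon entropy at most k, where Eff is the class of
   admissible (PPT) algorithms. *)
Definition acc_shannon_le (Eff : alg -> Prop) (m : nat -> nat)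
  (F : forall n, bits n -> bits (m n)) (k : nat -> R) : Prop :=
  forall A, Eff A -> collision_finder m F A ->
    exists N, forall n, (N <= n)%N -> cond_entropy A n <= k n.

Definition acc_maxent_le (Eff : alg -> Prop) (m : nat -> nat)
  (F : forall n, bits n -> bits (m n)) (p k' : nat -> R) : Prop :=
  forall A, Eff A -> collision_finder m F A ->
    exists L : forall n, bits n -> {set bits n},
      (forall n (x : bits n), x \in L n x /\ #|L n x|%:R <= 2 `^ (k' n)) /\
      exists N, forall n, (N <= n)%N -> 1 - p n <= succ_prob A n (L n).

End Defs.

(* Main.v *)
Require Import Defs.
From HB Require Import structures.
From mathcomp Require Import all_boot all_order all_algebra.
From mathcomp Require Import reals exp sequences.
From mathcomp Require Import ring lra.
Import Order.TTheory GRing.Theory Num.Theory.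
Local Open Scope ring_scope.

Section Count.
Variable R : realType.
Variable A : alg.
Variable n : nat.

Definition cnt (x y : bits n) := #|[set r : bits (coins A n) | run A n x r == y]|.

Lemma card_pre x (B : {set bits n}) :
  #|[set r : bits (coins A n) | run A n x r \in B]| = (\sum_(y in B) cnt x y)%N.
Proof.
rewrite -sum1_card (partition_big (run A n x) (fun y => y \in B)); last first.
  by move=> r; rewrite inE.
apply: eq_bigr => y yB; rewrite /cnt -sum1_card; apply: eq_bigl => r.
by rewrite !inE; case: (run A n x r =P y) => [->|]; rewrite ?yB ?andbF.
Qed.

Lemma qE x y : out_prob R A n x y = (cnt x y)%:R / (2 ^ coins A n)%:R.
Proof. by []. Qed.

Lemma M_gt0 : (0 : R) < (2 ^ coins A n)%:R.
Proof. by rewrite ltr0n expn_gt0. Qed.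

Lemma q_ge0 x y : 0 <= out_prob R A n x y.
Proof. by rewrite qE divr_ge0 // ltW // M_gt0. Qed.

Lemma sum_q x : \sum_y out_prob R A n x y = 1.
Proof.
have h := card_pre x setT.
have e : [set r : bits (coins A n) | run A n x r \in setT] = setT.
  by apply/setP => r; rewrite !inE.
rewrite e cardsT card_tuple card_bool in h.
under eq_bigr do rewrite qE.
rewrite -mulr_suml -natr_sum.
have -> : (\sum_y cnt x y)%N = (\sum_(y in setT) cnt x y)%N.
  by apply: eq_bigl => y; rewrite in_setT.
by rewrite -h divff // lt0r_neq0 // M_gt0.
Qed.

Lemma q_le1 x y : out_prob R A n x y <= 1.
Proof.
rewrite -(sum_q x) (bigD1 y) //= lerDl sumr_ge0 // => z _; exact: q_ge0.
Qed.

Lemma succE (L : bits n -> {set bits n}) :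
  succ_prob R A n L = ((2 ^ n)%:R)^-1 * \sum_x \sum_(y in L x) out_prob R A n x y.
Proof.
rewrite /succ_prob.
have -> : #|[set xr : bits n * bits (coins A n) | run A n xr.1 xr.2 \in L xr.1]|
   = (\sum_x #|[set r : bits (coins A n) | run A n x r \in L x]|)%N.
  rewrite -sum1_card.
  rewrite (eq_bigl (fun xr : bits n * bits (coins A n) => xpredT xr.1 && (run A n xr.1 xr.2 \in L xr.1))); last first.
    by move=> xr; rewrite !inE.
  rewrite -(pair_big_dep xpredT (fun x r => run A n x r \in L x) (fun _ _ => 1%N)) /=.
  apply: eq_bigr => x _; rewrite -sum1_card; apply: eq_bigl => r; by rewrite inE.
rewrite natr_sum expnD natrM invfM mulr_sumr mulr_suml.
apply: eq_bigr => x _; rewrite card_pre natr_sum mulr_sumr mulr_suml.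
apply: eq_bigr => y _; rewrite qE; field.
rewrite !pnatr_eq0 !expn_eq0 /=; done.
Qed.
End Count.
Section Num.
Variable R : realType.

Lemma pow2E (x : R) : 2 `^ x = expR (x * ln 2).
Proof. by rewrite /powR pnatr_eq0. Qed.

Lemma ln2_ge : (1/2 : R) <= ln 2.
Proof.
have h := expR_ge1Dx (- (1/2) : R).
have e : expR (1/2 : R) <= 2.
  have p : 0 < expR (1/2 : R) := expR_gt0 _.
  rewrite expRN in h.
  have : (1/2 : R) * expR (1/2) <= 1.
    have := ler_pM2r p; move=> hh.
    rewrite -[X in _ <= X](mulVf (lt0r_neq0 p)).
    rewrite ler_pM2r //. lra.
  lra.
rewrite -ler_expR lnK //; rewrite posrE; lra.
Qed.

Lemma ln2_gt0 : (0 : R) < ln 2.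
Proof. have := ln2_ge; lra. Qed.

Definition tau (t : R) := if 0 < t then t else 1.

Lemma tau_gt0 t : 0 < tau t.
Proof. rewrite /tau; case: ifP => //. Qed.

Lemma num_bound (t : R) : 1 + 2 `^ (tau t) <= 2 `^ (t + 4 * 2 `^ (- t)).
Proof.
have l2 := ln2_ge.
rewrite /tau; case: ifPn => ht.
  rewrite !pow2E mulrDl expRD.
  set u := expR (t * ln 2).
  have up : 0 < u by apply: expR_gt0.
  have w : expR (- t * ln 2) = u^-1 by rewrite mulNr expRN.
  rewrite w.
  have := expR_ge1Dx (4 * u^-1 * ln 2).
  set E := expR _ => hE.
  have ui : 0 < u^-1 by rewrite invr_gt0.
  have uu : u * u^-1 = 1 by rewrite mulfV // lt0r_neq0.
  have : u * (1 + 4 * u^-1 * ln 2) <= u * E by rewrite ler_pM2l.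
  nra.
rewrite -leNgt in ht.
rewrite !pow2E mul1r.
have hw := expR_ge1Dx (- t * ln 2).
have he := expR_ge1Dx ((t + 4 * expR (- t * ln 2)) * ln 2).
have h2 : expR (ln (2:R)) = 2 by rewrite lnK // posrE.
rewrite h2.
set w := expR (- t * ln 2) in hw he *.
have : 4 <= t + 4 * w by nra.
nra.
Qed.
End Num.

Theorem lemma3p8 (R : realType) :
  exists C : R,
  forall (Eff : alg -> Prop) (m : nat -> nat)
         (F : forall n, bits n -> bits (m n)) (k p : nat -> R),
    (forall n, 0 < p n < 1) ->
    acc_shannon_le R Eff m F k ->
    acc_maxent_le R Eff m F p (fun n => k n / p n + C * 2 `^ (- (k n / p n))).
Proof.
exists 4 => Eff m F k p hp hs A hE hc.
have [N hN] := hs A hE hc.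
pose q n x y := out_prob R A n x y.
pose S n x := [set y | (0 < q n x y) && (log2 R (q n x y)^-1 <= tau R (k n / p n))].
exists (fun n x => x |: S n x); split.
  move=> n x; split; first by rewrite setU11.
  apply: le_trans (num_bound _ _).
  have cS : #|S n x|%:R <= 2 `^ tau R (k n / p n) :> R.
    set T := tau R _.
    have Tp : 0 < T by apply: tau_gt0.
    rewrite -sum1_card natr_sum.
    apply: (@le_trans _ _ (\sum_y q n x y * 2 `^ T)); last first.
      by rewrite -mulr_suml sum_q mul1r.
    rewrite [X in _ <= X](bigID (fun y => y \in S n x)) /= -[X in X <= _]addr0.
    apply: lerD; last first.
      apply: sumr_ge0 => y _; apply: mulr_ge0; [exact: q_ge0| exact: powR_ge0].
    apply: ler_sum => y; rewrite inE => /andP[q0 hl].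
    have l2 := ln2_gt0 R.
    rewrite /log2 ler_pdivrMr // in hl.
    have : (q n x y)^-1 <= 2 `^ T.
      rewrite pow2E -[X in X <= _]lnK ?ler_expR // posrE invr_gt0 //.
    move=> h; rewrite -[X in X <= _](mulfV (lt0r_neq0 q0)) ler_pM2l //.
  have cc : (#|x |: S n x| <= 1 + #|S n x|)%N by rewrite cardsU1 leq_add2r leq_b1.
  apply: le_trans (_ : (1 + #|S n x|)%:R <= _); first by rewrite ler_nat.
  by rewrite natrD lerD.
exists N => n hn.
have hH := hN n hn.
have [p0 p1] := andP (hp n).
set T := tau R (k n / p n).
have Tp : 0 < T by apply: tau_gt0.
pose G x := \sum_(y | 0 < q n x y) q n x y * log2 R (q n x y)^-1.
have Hdef : cond_entropy R A n = ((2 ^ n)%:R)^-1 * \sum_x G x by [].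
have l2 := ln2_gt0 R.
have key : forall x, 1 - G x / T <= \sum_(y in x |: S n x) q n x y.
  move=> x.
  have gn : forall y, 0 <= (if 0 < q n x y then q n x y * log2 R (q n x y)^-1 else 0).
    move=> y; case: ifP => // q0; apply: mulr_ge0; first exact: ltW.
    apply: divr_ge0; last exact: ltW.
    apply: ln_ge0; rewrite invf_ge1 //; exact: q_le1.
  have hG : G x = \sum_y (if 0 < q n x y then q n x y * log2 R (q n x y)^-1 else 0).
    by rewrite /G big_mkcond.
  have h1 : \sum_(y | y \notin S n x) T * q n x y <= G x.
    rewrite hG [X in _ <= X](bigID (fun y => y \in S n x)) /= -[X in X <= _]add0r.
    apply: lerD; first by apply: sumr_ge0 => y _; apply: gn.
    apply: ler_sum => y; rewrite inE negb_and.
    case: ifP => q0 /=; last first.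
      have : q n x y = 0.
        by apply/eqP; rewrite eq_le q_ge0 andbT leNgt q0.
      by move=> ->; rewrite mulr0.
    rewrite -ltNge /log2 ltr_pdivlMr // => hl.
    rewrite mulrC ler_pM2l //; rewrite ler_pdivlMr //; exact: ltW.
  have h2 : \sum_(y in x |: S n x) q n x y >= \sum_(y in S n x) q n x y.
    rewrite [X in _ <= X](bigID (fun y => y \in S n x)) /=.
    rewrite -[X in X <= _]addr0; apply: lerD.
      by rewrite le_eqVlt; apply/orP; left; apply/eqP; apply: eq_bigl => y; rewrite in_setU1; case: (y \in S n x); rewrite ?orbT ?andbF.
    apply: sumr_ge0 => y _; exact: q_ge0.
  apply: le_trans h2.
  have := sum_q R A n x; rewrite (bigID (fun y => y \in S n x)) /= => hs1.
  rewrite -mulr_sumr in h1.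
  have : \sum_(y | y \notin S n x) q n x y <= G x / T.
    by rewrite ler_pdivlMr // mulrC.
  rewrite /q in hs1 *; lra.
rewrite succE.
have M0 : (0 : R) < (2 ^ n)%:R by rewrite ltr0n expn_gt0.
have hsum : \sum_x (1 - G x / T) <= \sum_x \sum_(y in x |: S n x) q n x y.
  by apply: ler_sum => x _; apply: key.
rewrite sumrB sumr_const card_tuple card_bool -mulr_suml in hsum.
have hb : cond_entropy R A n / T <= p n.
  rewrite /T /tau; case: ifP => t0.
    rewrite ler_pdivrMr //; apply: (le_trans hH).
    rewrite mulrCA divff ?mulr1 //; exact: lt0r_neq0.
  rewrite divr1; apply: (le_trans hH).
  have : k n <= 0.
    rewrite leNgt; apply/negP => kp; move: t0; rewrite divr_gt0 //.
  lra.
rewrite Hdef in hb.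
have : ((2 ^ n)%:R)^-1 * (1 *+ (2 ^ n)%N - (\sum_x G x) / T) <= ((2 ^ n)%:R)^-1 * \sum_x \sum_(y in x |: S n x) q n x y.
  by rewrite ler_pM2l // invr_gt0.
rewrite mulrBr -[1 *+ _]mulr_natr mul1r mulVf ?lt0r_neq0 // mulrA.
rewrite /q; lra.
Qed.
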